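(* The basin $\mathcal W^s(\mathcal B)$ contains the low temperature cylinder $\{(\phi,t)\in\mathcal C:\ t\le t_c\}\setminus\{\beta_c,\beta_c'\}$, where $\beta_c=(0,t_c)$ and $\beta_c'=(\pi,t_c)$.
   Context: $\mathcal C=(\mathbb R/2\pi\mathbb Z)\times[0,1]$ with coordinates $(\phi,t)$, $z=e^{i\phi}$, and $\mathcal R(z,t)=\big(\frac{z^2+t^2}{z^{-2}+t^2},\frac{z^2+z^{-2}+2}{z^2+z^{-2}+t^2+t^{-2}}\big)$, which maps $\mathcal C$ to itself (undefined only at $(\pm\pi/2,1)$). $\mathcal B=\{t=0\}$ is the bottom circle and $\mathcal W^s(\mathcal B)$ is the set of $x\in\mathcal C$ whose orbit is defined and converges to $\mathcal B$. $t_c\approx0.2956$ is the unique solution in $(0,1)$ of $(1+t^2)^2=4t$ (the repelling fixed point of $\mathcal R$ on $\{\phi=0\}$). *)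

(* Defs.v *)
From Stdlib Require Import Reals.
From Coquelicot Require Import Coquelicot.

(* A point of the cylinder C = (R/2piZ) x [0,1] is represented by (z, t)
   with z = e^{i phi} on the unit circle (Cmod z = 1) and 0 <= t <= 1. *)
Definition cpt : Type := (Complex.C * R)%type.

Definition in_cylinder (p : cpt) : Prop :=
  Cmod (fst p) = 1 /\ 0 <= snd p <= 1.

(* R is undefined exactly at (phi,t) = (+-pi/2, 1), i.e. z = +-i, t = 1. *)
Definition R_undefined (p : cpt) : Prop :=
  snd p = 1 /\ (fst p = Ci \/ fst p = Copp Ci).

(* The map R(z,t) = ((z^2+t^2)/(z^-2+t^2),
                      (z^2+z^-2+2)/(z^2+z^-2+t^2+t^-2)).
   The second component is written with the factor t^2 cleared,
   t^2 (z^2+z^-2+2) / (t^4 + t^2 (z^2+z^-2) + 1), which equals the paper's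
   expression for t > 0 and gives its continuous extension (= 0) at t = 0.
   For |z| = 1 this quantity is real; we take its real part. *)
Definition Rmap (p : cpt) : cpt :=
  let z := fst p in
  let t := snd p in
  let w := Cplus (Cmult z z) (Cinv (Cmult z z)) in
  ( Cdiv (Cplus (Cmult z z) (RtoC (t ^ 2)))
         (Cplus (Cinv (Cmult z z)) (RtoC (t ^ 2))),
    Re (Cdiv (Cmult (RtoC (t ^ 2)) (Cplus w (RtoC 2)))
             (Cplus (Cplus (RtoC (t ^ 4)) (Cmult (RtoC (t ^ 2)) w)) (RtoC 1))) ).

Definition orbit (n : nat) (p : cpt) : cpt := Nat.iter n Rmap p.

(* W^s(B): the orbit is defined (never hits an undefined point) and
   converges to the bottom circle B = {t = 0}; the distance from (phi,t)
   to B is t, so convergence to B means t_n -> 0. *)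
Definition in_basin_B (p : cpt) : Prop :=
  (forall n : nat, ~ R_undefined (orbit n p)) /\
  is_lim_seq (fun n => snd (orbit n p)) 0.

(* Main.v *)
Require Import Defs.
From Stdlib Require Import Reals Lra Psatz Arith.
From Coquelicot Require Import Coquelicot.
Open Scope R_scope.
Lemma step (a b t : R) : a^2+b^2 = 1 -> 0 <= t < 1 ->
  fst (fst (Rmap ((a,b), t))) ^2 + snd (fst (Rmap ((a,b), t))) ^2 = 1 /\
  snd (Rmap ((a,b), t)) = t^2*(2*(a*a-b*b)+2)/(t^4+2*(a*a-b*b)*t^2+1).
Proof.
  intros H Ht. 
  unfold Rmap, Cdiv, Cinv, Cplus, Cmult, RtoC, Re; simpl.
  assert (E: (a*a-b*b)*((a*a-b*b)*1) + (a*b+b*a)*((a*b+b*a)*1) = 1) by nra.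
  rewrite E.
  assert (Hc : -1 <= a*a-b*b <= 1) by nra.
  assert (E2: (a*a-b*b)^2 + (a*b+b*a)^2 = 1) by nra.
  set (c := a*a-b*b) in *. set (s := a*b+b*a) in *. clearbody c s.
  assert (Ht2 : 0 < 1 - t^2) by nra.
  assert (Hd : t^4+2*c*t^2+1 > 0) by (assert (0 <= (c+1)*t^2) by (apply Rmult_le_pos; nra); nra).
  assert (Hd2 : (c+t^2)^2+s^2 > 0) by nra.
  unfold Rdiv; rewrite Rinv_1, !Rmult_1_r.
  split.
  - field. nra.
  - field. nra.
Qed.

Definition unitc (z : Complex.C) : Prop := fst z ^ 2 + snd z ^ 2 = 1.

Lemma step' (p : cpt) : unitc (fst p) -> 0 <= snd p < 1 ->
  unitc (fst (Rmap p)) /\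
  exists c, -1 <= c <= 1 /\
  snd (Rmap p) = (snd p)^2*(2*c+2)/((snd p)^4+2*c*(snd p)^2+1) /\
  (c = 1 -> fst p = RtoC 1 \/ fst p = RtoC (-1)).
Proof.
  destruct p as [[a b] t]. unfold unitc; simpl fst; simpl snd. intros H Ht.
  destruct (step a b t H Ht) as [H1 H2]. split; [exact H1|].
  exists (a*a-b*b). split; [nra|]. split; [exact H2|].
  intros Hc. assert (b = 0) by nra. subst b.
  assert (Ha : (a - 1) * (a + 1) = 0) by nra.
  apply Rmult_integral in Ha. unfold RtoC.
  destruct Ha; [left|right]; f_equal; lra.
Qed.

Lemma bound_F (c t F : R) : -1 <= c <= 1 -> 0 <= t < 1 ->
  F = t^2*(2*c+2)/(t^4+2*c*t^2+1) ->
  0 <= F /\ F * (1+t^2)^2 <= 4*t^2.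
Proof.
  intros Hc Ht HF.
  assert (Ht2 : 0 < 1 - t^2) by nra.
  assert (Hd : t^4+2*c*t^2+1 > 0) by (assert (0 <= (c+1)*t^2) by (apply Rmult_le_pos; nra); nra).
  assert (HF' : F * (t^4+2*c*t^2+1) = t^2*(2*c+2)) by (rewrite HF; field; apply Rgt_not_eq; nra).
  assert (Hn : 0 <= t^2*(2*c+2)) by (apply Rmult_le_pos; nra).
  split.
  - rewrite HF. apply Rmult_le_pos; [lra| apply Rlt_le, Rinv_0_lt_compat; lra].
  - assert (K : 0 <= (1-c) * (1-t^2)^2) by (apply Rmult_le_pos; nra).
    assert (HF0 : 0 <= F) by (rewrite HF; apply Rmult_le_pos; [lra| apply Rlt_le, Rinv_0_lt_compat; lra]).
    assert (E : 4*t^2 * (t^4+2*c*t^2+1) - F*(1+t^2)^2*(t^4+2*c*t^2+1)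
               = t^2 * (2 * ((1-c)*(1-t^2)^2))).
    { replace (F*(1+t^2)^2*(t^4+2*c*t^2+1)) with ((F*(t^4+2*c*t^2+1))*(1+t^2)^2) by ring.
      rewrite HF'. ring. }
    assert (0 <= t^2 * (2 * ((1-c)*(1-t^2)^2))) by (apply Rmult_le_pos; nra).
    assert (0 <= (4*t^2 - F*(1+t^2)^2)*(t^4+2*c*t^2+1)) by nra.
    destruct (Rle_dec (F * (1+t^2)^2) (4*t^2)) as [|Hn']; [assumption|].
    exfalso. assert (0 < (F*(1+t^2)^2 - 4*t^2)*(t^4+2*c*t^2+1)) by (apply Rmult_lt_0_compat; lra).
    lra.
Qed.

Lemma pow_le1 (q : R) (n : nat) : 0 <= q <= 1 -> 0 <= q ^ n <= 1.
Proof.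
  intros Hq. induction n as [|n IH]; simpl; [lra|]. split; [nra|nra].
Qed.

Section Main.
Variable tc : R.
Hypothesis Htc : 0 < tc < 1.
Hypothesis Htc_eq : (1 + tc ^ 2) ^ 2 = 4 * tc.

Lemma tc_fact : tc^3 + tc^2 + 3*tc = 1.
Proof.
  assert (E : (1 + tc^2)^2 - 4*tc = (1 - tc) * (1 - 3*tc - tc^2 - tc^3)) by ring.
  rewrite Htc_eq in E.
  assert (H0 : (1 - tc) * (1 - 3*tc - tc^2 - tc^3) = 0) by lra.
  apply Rmult_integral in H0. destruct H0; lra.
Qed.

Lemma tc_third : tc < 1/3.
Proof. pose proof tc_fact. nra. Qed.

Lemma q_lt1 (t0 : R) : 0 <= t0 < tc -> 4*t0 < (1+t0^2)^2.
Proof.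
  intros H. pose proof tc_fact.
  assert (E : (1 + t0^2)^2 - 4*t0 = (1 - t0) * (1 - 3*t0 - t0^2 - t0^3)) by ring.
  assert (H2 : t0*t0 <= tc*tc) by (apply Rmult_le_compat; lra).
  assert (H3 : t0*t0*t0 <= tc*tc*tc) by (apply Rmult_le_compat; nra).
  assert (0 < 1 - 3*t0 - t0^2 - t0^3) by (simpl; lra).
  assert (0 < (1 - t0) * (1 - 3*t0 - t0^2 - t0^3)) by (apply Rmult_lt_0_compat; lra).
  lra.
Qed.

Lemma mono (s t0 : R) : 0 <= s <= t0 -> t0 < 1/3 -> s*(1+t0^2)^2 <= t0*(1+s^2)^2.
Proof.
  intros Hs Ht.
  assert (E : t0*(1+s^2)^2 - s*(1+t0^2)^2 = (t0 - s)*(1 - 2*s*t0 - s*t0*(t0^2+t0*s+s^2))) by ring.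
  assert (0 <= s*t0 <= 1/9) by nra.
  assert (0 <= t0^2+t0*s+s^2 <= 1/3) by nra.
  assert (0 <= s*t0*(t0^2+t0*s+s^2) <= 1/27) by nra.
  assert (0 <= (t0 - s)*(1 - 2*s*t0 - s*t0*(t0^2+t0*s+s^2))) by (apply Rmult_le_pos; lra).
  lra.
Qed.

Lemma invariant (p : cpt) (t0 : R) : unitc (fst p) -> 0 <= snd p <= t0 -> t0 < tc ->
  forall n, unitc (fst (orbit n p)) /\
    0 <= snd (orbit n p) <= (4*t0/(1+t0^2)^2) ^ n * t0.
Proof.
  intros Hu Hp Ht0.
  pose proof tc_third as Hthird.
  assert (HQ : 0 < (1+t0^2)^2) by nra.
  assert (Hq1 : 4*t0 < (1+t0^2)^2) by (apply q_lt1; lra).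
  set (q := 4*t0/(1+t0^2)^2).
  assert (Hq : 0 <= q <= 1).
  { unfold q; split.
    - apply Rmult_le_pos; [lra| apply Rlt_le, Rinv_0_lt_compat; lra].
    - apply Rmult_le_reg_r with ((1+t0^2)^2); [lra|]. unfold Rdiv.
      rewrite Rmult_assoc, Rinv_l by lra. lra. }
  induction n as [|n IH].
  - simpl. split; [exact Hu|lra].
  - destruct IH as [IHu IHt].
    destruct (pow_le1 q n Hq) as [Hqn0 Hqn1].
    set (tn := snd (orbit n p)) in *.
    assert (Htn : tn <= t0) by nra.
    change (orbit (S n) p) with (Rmap (orbit n p)).
    destruct (step' (orbit n p) IHu) as [Hu' [c [Hc [HF _]]]]; [fold tn; lra|].
    split; [exact Hu'|].
    fold tn in HF.
    destruct (bound_F c tn _ Hc ltac:(lra) HF) as [HF0 HF1].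
    set (t' := snd (Rmap (orbit n p))) in *.
    split; [exact HF0|].
    assert (HP : 0 < (1+tn^2)^2) by nra.
    assert (HM : tn*(1+t0^2)^2 <= t0*(1+tn^2)^2) by (apply mono; lra).
    assert (A1 : t' * (1+tn^2)^2 * (1+t0^2)^2 <= 4*tn^2*(1+t0^2)^2) by
      (apply Rmult_le_compat_r; lra).
    assert (A2 : 4*tn^2*(1+t0^2)^2 <= 4*tn*t0*(1+tn^2)^2).
    { replace (4*tn^2*(1+t0^2)^2) with ((4*tn)*(tn*(1+t0^2)^2)) by ring.
      replace (4*tn*t0*(1+tn^2)^2) with ((4*tn)*(t0*(1+tn^2)^2)) by ring.
      apply Rmult_le_compat_l; lra. }
    assert (A3 : t' * (1+t0^2)^2 <= 4*tn*t0).
    { apply Rmult_le_reg_r with ((1+tn^2)^2); [lra|].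
      replace (t' * (1 + t0 ^ 2) ^ 2 * (1 + tn ^ 2) ^ 2) with (t' * (1+tn^2)^2 * (1+t0^2)^2) by ring.
      lra. }
    assert (A4 : t' <= q * tn).
    { unfold q. apply Rmult_le_reg_r with ((1+t0^2)^2); [lra|].
      replace (4 * t0 / (1 + t0 ^ 2) ^ 2 * tn * (1 + t0 ^ 2) ^ 2) with (4*t0*tn)
        by (field; apply Rgt_not_eq; nra). lra. }
    simpl pow.
    assert (q * tn <= q * (q^n * t0)) by (apply Rmult_le_compat_l; lra).
    lra.
Qed.

Lemma basin_small (p : cpt) (t0 : R) : unitc (fst p) -> 0 <= snd p <= t0 -> t0 < tc ->
  in_basin_B p.
Proof.
  intros Hu Hp Ht0.
  pose proof (invariant p t0 Hu Hp Ht0) as Inv.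
  assert (HQ : 0 < (1+t0^2)^2) by nra.
  assert (Hq1 : 4*t0 < (1+t0^2)^2) by (apply q_lt1; lra).
  set (q := 4*t0/(1+t0^2)^2) in *.
  assert (Hq : 0 <= q < 1).
  { unfold q; split.
    - apply Rmult_le_pos; [lra| apply Rlt_le, Rinv_0_lt_compat; lra].
    - apply Rmult_lt_reg_r with ((1+t0^2)^2); [lra|]. unfold Rdiv.
      rewrite Rmult_assoc, Rinv_l by lra. lra. }
  split.
  - intros n [H1 _]. destruct (Inv n) as [_ [_ H2]].
    destruct (pow_le1 q n ltac:(lra)). nra.
  - apply is_lim_seq_le_le with (u := fun _ => 0) (w := fun n => q^n * t0).
    + intros n. destruct (Inv n) as [_ H]. exact H.
    + apply is_lim_seq_const.
    + replace (Finite 0) with (Rbar_mult 0 t0) by (simpl; f_equal; ring).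
      apply is_lim_seq_scal_r, is_lim_seq_geom. rewrite Rabs_pos_eq; lra.
Qed.

End Main.

Theorem lemma9p1 (tc : R) (Htc : 0 < tc < 1) (Htc_eq : (1 + tc ^ 2) ^ 2 = 4 * tc)
  (z : Complex.C) (t : R) :
  in_cylinder (z, t) -> t <= tc ->
  (z, t) <> (RtoC 1, tc) -> (z, t) <> (RtoC (-1), tc) ->
  in_basin_B (z, t).
Proof.
  intros [Hm Ht] Hle Hn1 Hn2. simpl in Hm, Ht.
  assert (Hu : unitc z).
  { unfold Cmod in Hm. unfold unitc.
    assert (0 <= fst z ^ 2 + snd z ^ 2) by nra.
    rewrite <- (sqrt_sqrt (fst z ^ 2 + snd z ^ 2)) by assumption. rewrite Hm. ring. }
  destruct (Rle_lt_or_eq_dec t tc Hle) as [Hlt|Heq].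
  - apply (basin_small tc Htc Htc_eq (z,t) t); simpl; auto; lra.
  - subst t.
    destruct (step' (z,tc) Hu) as [Hu' [c [Hc [HF Hc1]]]]; [simpl; lra|].
    change (snd (z,tc)) with tc in HF. change (fst (z,tc)) with z in Hc1.
    assert (Hc' : c < 1).
    { destruct (Rlt_or_le c 1) as [|Hc2]; [assumption|].
      destruct (Hc1 ltac:(lra)) as [E|E]; subst z; [now elim Hn1|now elim Hn2]. }
    destruct (bound_F c tc _ Hc ltac:(lra) HF) as [HF0 _].
    set (t1 := snd (Rmap (z, tc))) in *.
    assert (Hd : tc^4+2*c*tc^2+1 > 0).
    { assert (0 < 1 - tc^2) by nra.
      assert (0 <= (c+1)*tc^2) by (apply Rmult_le_pos; nra). nra. }
    assert (Ht1 : t1 < tc).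
    { rewrite HF. apply Rmult_lt_reg_r with (tc^4+2*c*tc^2+1); [lra|].
      replace (tc ^ 2 * (2 * c + 2) / (tc ^ 4 + 2 * c * tc ^ 2 + 1) * (tc ^ 4 + 2 * c * tc ^ 2 + 1))
        with (tc ^ 2 * (2 * c + 2)) by (field; apply Rgt_not_eq; nra).
      assert (E : tc*(tc ^ 4 + 2 * c * tc ^ 2 + 1) - tc ^ 2 * (2 * c + 2)
                = tc * (((1+tc^2)^2 - 4*tc) + (1-c)*(2*tc*(1-tc)))) by ring.
      rewrite Htc_eq in E.
      assert (0 < (1-c)*(2*tc*(1-tc))) by (apply Rmult_lt_0_compat; nra).
      assert (0 < tc * (4*tc - 4*tc + (1-c)*(2*tc*(1-tc)))) by (apply Rmult_lt_0_compat; lra).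
      lra. }
    destruct (basin_small tc Htc Htc_eq (Rmap (z,tc)) t1 Hu' ltac:(fold t1; lra) Ht1) as [B1 B2].
    split.
    + intros [|n].
      * intros [H1 _]. simpl in H1. lra.
      * unfold orbit; rewrite (Nat.iter_succ_r n cpt Rmap (z,tc)). apply B1.
    + apply is_lim_seq_incr_1.
      eapply is_lim_seq_ext; [|exact B2].
      intros n. unfold orbit. rewrite (Nat.iter_succ_r n cpt Rmap (z,tc)). reflexivity.
Qed.
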